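(* For an integer $j\ge 2$ let $\bar\alpha_j$ be the largest $\alpha\ge 0$ such that $\left(1-e^{-\alpha j x}\right)^{j-1}\le x$ for all $x\in(0,1]$. Then $\bar\alpha_2=\tfrac12$, and for $j\ge 3$, $$\bar\alpha_j=\frac{1}{j}\,y_j^*\left(1-e^{-y_j^*}\right)^{1-j},$$ where $y_j^*$ is the unique positive solution of $e^{y}=(j-1)y+1$ (equivalently $y_j^*=-\frac{1}{j-1}\bigl(1+(j-1)W_{-1}\bigl(-\tfrac{1}{j-1}e^{-1/(j-1)}\bigr)\bigr)$ with $W_{-1}$ the non-principal real branch of the Lambert $W$ function). Numerically, $\bar\alpha_3\approx 0.8184$ and $\bar\alpha_4\approx 0.7722$. *)

(* Defs.v *)
From Stdlib Require Import Reals.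
Open Scope R_scope.

Definition admissible (j : nat) (alpha : R) : Prop :=
  0 <= alpha /\
  forall x : R, 0 < x <= 1 -> (1 - exp (- (alpha * INR j * x))) ^ (j - 1) <= x.

Definition is_largest_admissible (j : nat) (a : R) : Prop :=
  admissible j a /\ forall alpha : R, admissible j alpha -> alpha <= a.

(* Main.v *)
Require Import Defs.
From Stdlib Require Import Reals Lra Psatz.
Open Scope R_scope.

Lemma dlim_eq f x l l' : derivable_pt_lim f x l -> l = l' -> derivable_pt_lim f x l'.
Proof. intros H ->; exact H. Qed.

Lemma dg c : derivable_pt_lim (fun y => 1 - exp (- y)) c (exp (- c)).
Proof.
  change (fun y => 1 - exp (- y)) with (fct_cte 1 - comp exp (opp_fct id))%F.
  eapply dlim_eq.
  - apply derivable_pt_lim_minus. apply derivable_pt_lim_const.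
    apply derivable_pt_lim_comp. apply derivable_pt_lim_opp. apply derivable_pt_lim_id.
    apply derivable_pt_lim_exp.
  - unfold opp_fct, id. ring.
Qed.

Lemma pos_1mexp c : 0 < c -> 0 < 1 - exp (- c).
Proof. intros. assert (exp (-c) < exp 0) by (apply exp_increasing; lra). rewrite exp_0 in H0. lra. Qed.

Lemma dphi m c : 0 < c -> derivable_pt_lim (fun y => ln y - INR m * ln (1 - exp (- y))) c
   (/ c - INR m * (/ (1 - exp (- c)) * exp (- c))).
Proof.
  intros Hc.
  change (fun y => ln y - INR m * ln (1 - exp (- y))) with
    (ln - mult_real_fct (INR m) (comp ln (fun y => (1 - exp (- y))%R)))%F.
  apply derivable_pt_lim_minus. apply derivable_pt_lim_ln; lra.
  apply derivable_pt_lim_scal. apply derivable_pt_lim_comp. apply dg.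
  apply derivable_pt_lim_ln. apply pos_1mexp; lra.
Qed.

Definition hh (n c : R) := exp c - 1 - n * c.

Lemma dh n c : derivable_pt_lim (hh n) c (exp c - n).
Proof.
  unfold hh.
  change (fun c => exp c - 1 - n * c) with (exp - fct_cte 1 - mult_real_fct n id)%F.
  eapply dlim_eq.
  - apply derivable_pt_lim_minus. apply derivable_pt_lim_minus.
    apply derivable_pt_lim_exp. apply derivable_pt_lim_const.
    apply derivable_pt_lim_scal. apply derivable_pt_lim_id.
  - ring.
Qed.

Lemma hh0 n : hh n 0 = 0.
Proof. unfold hh. rewrite exp_0. ring. Qed.

Lemma h_neg n y0 c : 0 < y0 -> hh n y0 = 0 -> 0 < c < y0 -> hh n c < 0.
Proof.
  intros Hy H0 Hc.
  destruct (MVT_cor2 (hh n) (fun x => exp x - n) 0 c) as [d1 [E1 D1]]; [lra| intros; apply dh |].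
  destruct (MVT_cor2 (hh n) (fun x => exp x - n) c y0) as [d2 [E2 D2]]; [lra| intros; apply dh |].
  rewrite hh0 in E1.
  assert (exp d1 < exp d2) by (apply exp_increasing; lra).
  destruct (Rlt_or_le (hh n c) 0) as [|Hge]; [assumption|].
  exfalso.
  assert (exp d1 - n >= 0).
  { destruct (Rlt_or_le (exp d1 - n) 0); [|lra]. nra. }
  assert (0 < (exp d2 - n) * (y0 - c)) by (apply Rmult_lt_0_compat; lra).
  lra.
Qed.

Lemma h_pos n y0 c : 0 < y0 -> hh n y0 = 0 -> y0 < c -> 0 < hh n c.
Proof.
  intros Hy H0 Hc.
  destruct (MVT_cor2 (hh n) (fun x => exp x - n) 0 y0) as [d1 [E1 D1]]; [lra| intros; apply dh |].
  destruct (MVT_cor2 (hh n) (fun x => exp x - n) y0 c) as [d2 [E2 D2]]; [lra| intros; apply dh |].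
  rewrite hh0, H0 in E1.
  assert (exp d1 < exp d2) by (apply exp_increasing; lra).
  assert (exp d1 - n = 0).
  { destruct (Req_dec (exp d1 - n) 0); [assumption|].
    exfalso. assert ((exp d1 - n) * (y0 - 0) <> 0) by (apply Rmult_integral_contrapositive; lra). lra. }
  assert (0 < (exp d2 - n) * (c - y0)) by (apply Rmult_lt_0_compat; lra).
  lra.
Qed.

Lemma dphi_eq m c : 0 < c ->
  (/ c - INR m * (/ (1 - exp (- c)) * exp (- c))) * (c * (1 - exp (- c)))
  = exp (- c) * hh (INR m) c.
Proof.
  intros Hc. pose proof (pos_1mexp c Hc).
  assert (exp (- c) * exp c = 1) by (rewrite <- exp_plus; replace (-c + c) with 0 by ring; apply exp_0).
  unfold hh. field_simplify; try lra.
Qed.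

Definition phi (m : nat) y := ln y - INR m * ln (1 - exp (- y)).
Definition dphiv (m : nat) c := / c - INR m * (/ (1 - exp (- c)) * exp (- c)).

Lemma dphi_sign_neg m y0 c : 0 < y0 -> hh (INR m) y0 = 0 -> 0 < c < y0 -> dphiv m c < 0.
Proof.
  intros. pose proof (h_neg _ _ _ H H0 H1). pose proof (dphi_eq m c ltac:(lra)).
  pose proof (pos_1mexp c ltac:(lra)). pose proof (exp_pos (- c)). unfold dphiv.
  assert (0 < c * (1 - exp (- c))) by (apply Rmult_lt_0_compat; lra).
  destruct (Rlt_or_le (/ c - INR m * (/ (1 - exp (- c)) * exp (- c))) 0); [assumption|].
  exfalso. assert (0 <= (/ c - INR m * (/ (1 - exp (- c)) * exp (- c))) * (c * (1 - exp (- c)))) by (apply Rmult_le_pos; lra).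
  assert (exp (- c) * hh (INR m) c < 0) by (apply Rmult_pos_neg; lra). lra.
Qed.

Lemma dphi_sign_pos m y0 c : 0 < y0 -> hh (INR m) y0 = 0 -> y0 < c -> 0 < dphiv m c.
Proof.
  intros. pose proof (h_pos _ _ _ H H0 H1). pose proof (dphi_eq m c ltac:(lra)).
  pose proof (pos_1mexp c ltac:(lra)). pose proof (exp_pos (- c)). unfold dphiv.
  assert (0 < c * (1 - exp (- c))) by (apply Rmult_lt_0_compat; lra).
  destruct (Rlt_or_le 0 (/ c - INR m * (/ (1 - exp (- c)) * exp (- c)))); [assumption|].
  exfalso. assert ((/ c - INR m * (/ (1 - exp (- c)) * exp (- c))) * (c * (1 - exp (- c))) <= 0).
  { nra. }
  assert (0 < exp (- c) * hh (INR m) c) by (apply Rmult_lt_0_compat; lra). lra.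
Qed.

Lemma phi_min m y0 y : 0 < y0 -> hh (INR m) y0 = 0 -> 0 < y -> phi m y0 <= phi m y.
Proof.
  intros Hy0 H0 Hy.
  destruct (Rtotal_order y y0) as [Hl|[He|Hg]].
  - destruct (MVT_cor2 (phi m) (dphiv m) y y0) as [c [E D]]; [lra| intros; apply dphi; lra|].
    pose proof (dphi_sign_neg m y0 c Hy0 H0 ltac:(lra)).
    assert (dphiv m c * (y0 - y) < 0) by (apply Rmult_neg_pos; lra). lra.
  - subst; lra.
  - destruct (MVT_cor2 (phi m) (dphiv m) y0 y) as [c [E D]]; [lra| intros; apply dphi; lra|].
    pose proof (dphi_sign_pos m y0 c Hy0 H0 ltac:(lra)).
    assert (0 < dphiv m c * (y - y0)) by (apply Rmult_lt_0_compat; lra). lra.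
Qed.

Lemma key m y0 y : 0 < y0 -> exp y0 = INR m * y0 + 1 -> 0 < y ->
  y0 * (1 - exp (- y)) ^ m <= y * (1 - exp (- y0)) ^ m.
Proof.
  intros Hy0 E Hy.
  assert (H0 : hh (INR m) y0 = 0) by (unfold hh; rewrite E; ring).
  pose proof (phi_min m y0 y Hy0 H0 Hy). unfold phi in H.
  pose proof (pos_1mexp y Hy). pose proof (pos_1mexp y0 Hy0).
  assert (A : 0 < y0 * (1 - exp (- y)) ^ m) by (apply Rmult_lt_0_compat; [lra| apply pow_lt; lra]).
  assert (B : 0 < y * (1 - exp (- y0)) ^ m) by (apply Rmult_lt_0_compat; [lra| apply pow_lt; lra]).
  destruct (Rlt_or_le (y * (1 - exp (- y0)) ^ m) (y0 * (1 - exp (- y)) ^ m)) as [L|]; [|assumption].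
  exfalso. pose proof (ln_increasing _ _ B L).
  rewrite !ln_mult, !ln_pow in H3; try lra; try (apply pow_lt; lra).
Qed.

Lemma h_cont n : continuity (hh n).
Proof. apply derivable_continuous. intro c. exists (exp c - n). apply dh. Qed.

Lemma exist_root n : 2 <= n -> exists y, 0 < y /\ hh n y = 0.
Proof.
  intros Hn.
  assert (A : hh n (1/4) < 0).
  { unfold hh. assert (1 + (- (1/4)) < exp (- (1/4))) by (apply exp_ineq1; lra).
    assert (exp (1/4) * exp (- (1/4)) = 1) by (rewrite <- exp_plus; replace (1/4 + - (1/4)) with 0 by ring; apply exp_0).
    pose proof (exp_pos (1/4)). nra. }
  assert (B : 0 < hh n (4 * n)).
  { unfold hh. assert (1 + 2 * n < exp (2 * n)) by (apply exp_ineq1; lra).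
    replace (4 * n) with (2 * n + 2 * n) by ring. rewrite exp_plus. nra. }
  destruct (IVT (hh n) (1/4) (4 * n) (h_cont n) ltac:(lra) A B) as [z [Hz E]].
  exists z. split; [lra|exact E].
Qed.

Lemma uniq_root n y1 y2 : 0 < y1 -> hh n y1 = 0 -> 0 < y2 -> hh n y2 = 0 -> y1 = y2.
Proof.
  intros. destruct (Rtotal_order y1 y2) as [L|[E|G]].
  - pose proof (h_neg n y2 y1 H1 H2 ltac:(lra)). lra.
  - exact E.
  - pose proof (h_neg n y1 y2 H H0 ltac:(lra)). lra.
Qed.

Lemma pow_le_one x m : 0 <= x <= 1 -> x ^ m <= 1.
Proof. intros. rewrite <- (pow1 m). apply pow_incr. lra. Qed.

Lemma dsmall c : derivable_pt_lim (fun x => 1 - exp (- (c * x))) 0 c.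
Proof.
  change (fun x => 1 - exp (- (c * x))) with
    (comp (fun y => (1 - exp (- y))%R) (mult_real_fct c id)).
  eapply dlim_eq.
  - apply derivable_pt_lim_comp. apply derivable_pt_lim_scal. apply derivable_pt_lim_id.
    apply dg.
  - unfold mult_real_fct, id. rewrite Rmult_0_r, Ropp_0, exp_0. ring.
Qed.

Lemma case2 : is_largest_admissible 2 (1 / 2).
Proof.
  split.
  - split; [lra|]. intros x Hx. simpl.
    replace (1 / 2 * (1 + 1) * x) with x by field.
    assert (1 + - x < exp (- x)) by (apply exp_ineq1; lra). lra.
  - intros alpha [Ha Hadm]. destruct (Rle_or_lt alpha (1/2)) as [|Hg]; [assumption|].
    exfalso. set (c := alpha * INR 2).
    assert (Hc : 1 < c) by (unfold c; simpl; lra).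
    destruct (dsmall c (c - 1) ltac:(lra)) as [d Hd].
    set (h := Rmin 1 (d / 2)).
    assert (Hh0 : 0 < h) by (unfold h; apply Rmin_glb_lt; [lra| pose proof (cond_pos d); lra]).
    assert (Hh1 : h <= 1) by (unfold h; apply Rmin_l).
    assert (Hh2 : h <= d / 2) by (unfold h; apply Rmin_r).
    specialize (Hd h ltac:(lra)). rewrite Rabs_right in Hd by lra.
    assert (Hd' : Rabs ((1 - exp (- (c * (0 + h))) - (1 - exp (- (c * 0)))) / h - c) < c - 1).
    { apply Hd. pose proof (cond_pos d). lra. }
    rewrite Rplus_0_l, Rmult_0_r, Ropp_0, exp_0 in Hd'.
    pose proof (Rabs_def2 _ _ Hd') as [_ Hlow].
    specialize (Hadm h ltac:(lra)). simpl in Hadm. fold c in Hadm.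
    assert (((1 - exp (- (c * h))) - (1 - 1)) / h = (1 - exp (- (c * h))) / h) by (f_equal; ring).
    rewrite H in Hlow.
    assert (1 < (1 - exp (- (c * h))) / h) by lra.
    apply Rmult_lt_compat_r with (r := h) in H0; [|lra].
        unfold Rdiv in H0. rewrite Rmult_assoc, Rinv_l, Rmult_1_r in H0 by lra. replace (alpha * (1 + 1)) with c in Hadm by (unfold c; simpl; ring). lra.
Qed.

Theorem proposition1 :
  is_largest_admissible 2 (1 / 2) /\
  forall j : nat, (3 <= j)%nat ->
    (exists! y : R, 0 < y /\ exp y = INR (j - 1) * y + 1) /\
    forall y : R, 0 < y -> exp y = INR (j - 1) * y + 1 ->
      is_largest_admissible j (/ INR j * y * / (1 - exp (- y)) ^ (j - 1)).
Proof.
  split; [exact case2|].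
  intros j Hj.
  assert (Hn : 2 <= INR (j - 1)).
  { replace 2 with (INR 2) by (simpl; ring). apply le_INR. lia. }
  assert (Hjp : 0 < INR j).
  { apply lt_0_INR. lia. }
  split.
  - destruct (exist_root _ Hn) as [y [Hy E]]. exists y. split.
    + split; [exact Hy|]. unfold hh in E. lra.
    + intros y' [Hy' E']. apply (uniq_root (INR (j - 1))); auto; unfold hh; lra.
  - intros y0 Hy0 E.
    set (m := (j - 1)%nat) in *.
    pose proof (pos_1mexp y0 Hy0) as Q.
    set (P0 := (1 - exp (- y0)) ^ m).
    assert (HP0 : 0 < P0) by (unfold P0; apply pow_lt; lra).
    assert (HP1 : P0 <= 1).
    { unfold P0. apply pow_le_one. pose proof (exp_pos (- y0)). lra. }
    assert (Haj : / INR j * y0 * / P0 * INR j = y0 / P0) by (field; lra).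
    split.
    + split.
      * apply Rmult_le_pos; [apply Rmult_le_pos|]; try lra.
        -- left; apply Rinv_0_lt_compat; lra.
        -- left; apply Rinv_0_lt_compat; lra.
      * intros x Hx. rewrite Haj.
        set (z := y0 / P0 * x).
        assert (Hz : 0 < z) by (unfold z; apply Rmult_lt_0_compat; [apply Rdiv_lt_0_compat|]; lra).
        pose proof (key m y0 z Hy0 E Hz) as K. fold P0 in K.
        assert (z * P0 = y0 * x) by (unfold z; field; lra).
        rewrite H in K.
        fold m. apply Rmult_le_reg_l with y0; lra.
    + intros alpha [Ha Hadm].
      destruct (Rle_or_lt alpha (/ INR j * y0 * / P0)) as [|Hg]; [assumption|].
      exfalso.
      assert (Hag : y0 / P0 < alpha * INR j).
      { rewrite <- Haj. apply Rmult_lt_compat_r; lra. }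
      assert (Hy0P : y0 <= y0 / P0).
      { apply Rmult_le_reg_r with P0; [lra|]. unfold Rdiv. rewrite Rmult_assoc, Rinv_l by lra. nra. }
      assert (Haj0 : 0 < alpha * INR j) by lra.
      set (x := y0 / (alpha * INR j)).
      assert (Hx0 : 0 < x) by (unfold x; apply Rdiv_lt_0_compat; lra).
      assert (Hx1 : x <= 1).
      { unfold x. apply Rmult_le_reg_r with (alpha * INR j); [lra|].
        unfold Rdiv. rewrite Rmult_assoc, Rinv_l by lra. lra. }
      specialize (Hadm x ltac:(lra)).
      assert (Hx : y0 = alpha * INR j * x). { unfold x. field. split; [lra|]. intro Z; rewrite Z in Haj0; lra. }
      rewrite <- Hx in Hadm.
      fold m in Hadm. fold P0 in Hadm.
      assert (P0 * (alpha * INR j) <= y0).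
      { rewrite Hx. rewrite (Rmult_comm (alpha * INR j) x). apply Rmult_le_compat_r; lra. }
      assert (alpha * INR j <= y0 / P0).
      { apply Rmult_le_reg_l with P0; [lra|]. unfold Rdiv. field_simplify; lra. }
      lra.
Qed.
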